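(* Let $S$ be any $k$-uniform hypergraph on $n$ vertices with $m$ edges, and let $p=p(n)$ be such that $$\Pr\left[H\sim\mathcal H^k(n,p)\text{ contains a copy of }S\right]=1-o(1).$$ Then for every $\varepsilon\ge0$, letting $c=(1+\varepsilon)m$ and $q=\frac{cp}{\varepsilon m+1}$, if $q\le 1$ then $$\Pr\left[H\sim\mathcal H^k_c(n,q)\text{ contains a rainbow copy of }S\right]=1-o(1).$$
   Context: $\mathcal H^k(n,p)$ is the binomial random $k$-uniform hypergraph on $[n]$; $\mathcal H^k_c(n,q)$ is $\mathcal H^k(n,q)$ with each edge independently given a uniformly random color from $[c]$. A rainbow copy of $S$ is a copy of $S$ all of whose edges receive distinct colors. Asymptotics as $n\to\infty$. *)

(* Defs.v *)
From HB Require Import structures.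
From mathcomp Require Import all_boot all_order all_algebra all_fingroup.
From mathcomp Require Import all_classical all_reals all_analysis.
Set Implicit Arguments. Unset Strict Implicit. Unset Printing Implicit Defensive.
Import Order.TTheory GRing.Theory Num.Theory.
Local Open Scope ring_scope.

Definition ksets (n k : nat) : {set {set 'I_n}} := [set e : {set 'I_n} | #|e| == k].

Definition uniform (n k : nat) (S : {set {set 'I_n}}) : bool := S \subset ksets n k.

Definition has_copy (n : nat) (S H : {set {set 'I_n}}) : bool :=
  [exists f : {perm 'I_n}, [forall e in S, (f @: e) \in H]].

Definition binom_prob (R : realType) (n k : nat) (p : R)
    (P : {set {set 'I_n}} -> bool) : R :=
  \sum_(H : {set {set 'I_n}} | (H \subset ksets n k) && P H)
     p ^+ #|H| * (1 - p) ^+ (#|ksets n k| - #|H|)%N.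

(* A coloured k-graph with colours in [c]: w e = None if e is not an edge,
   w e = Some i if e is an edge of colour i; non-k-sets are never edges. *)
Definition colored_outcome (n c : nat) := {ffun {set 'I_n} -> option 'I_c}.

(* Pr[ H ~ H^k_c(n,q) satisfies P ]: each k-set independently is an edge with
   probability q, and each edge gets an independent uniform colour in [c]. *)
Definition colored_prob (R : realType) (n k c : nat) (q : R)
    (P : colored_outcome n c -> bool) : R :=
  \sum_(w : colored_outcome n c |
          [forall e, (e \notin ksets n k) ==> (w e == None)] && P w)
     \prod_(e in ksets n k) (if w e is Some _ then q / c%:R else 1 - q).

Definition has_rainbow_copy (n c : nat) (S : {set {set 'I_n}})
    (w : colored_outcome n c) : bool :=
  [exists f : {perm 'I_n},
     [forall e in S, w (f @: e) != None] &&
     [forall e1 in S, forall e2 in S, (w (f @: e1) == w (f @: e2)) ==> (e1 == e2)]].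

(* Main.v *)
Require Import Defs.
From HB Require Import structures.
From mathcomp Require Import all_boot all_order all_algebra all_fingroup.
From mathcomp Require Import all_classical all_reals all_analysis.
From mathcomp Require Import lra zify ring.
Import Order.TTheory GRing.Theory Num.Theory numFieldNormedType.Exports.
Set Implicit Arguments. Unset Strict Implicit. Unset Printing Implicit Defensive.
Local Open Scope ring_scope.

Section ExSec.
Variables (R : realDomainType) (T X : finType) (rho : X -> R).
Implicit Types (l : seq T) (g : {ffun T -> X}) (f : {ffun T -> X} -> R).

Definition upd (g : {ffun T -> X}) (e : T) (x : X) : {ffun T -> X} :=
  [ffun y => if y == e then x else g y].

Fixpoint Ex (l : seq T) (g : {ffun T -> X}) (f : {ffun T -> X} -> R) : R :=
  if l is e :: l' then \sum_(x : X) rho x * Ex l' (upd g e x) f else f g.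

Lemma Ex_ext_on l g f f' :
  (forall w : {ffun T -> X}, (forall y, y \notin l -> w y = g y) -> f w = f' w) ->
  Ex l g f = Ex l g f'.
Proof.
elim: l g => [|e l IH] g /= H; first by apply: H.
apply: eq_bigr => x _; congr (_ * _); apply: IH => w Hw; apply: H => y.
rewrite in_cons negb_or => /andP[ye yl]; rewrite Hw // ffunE (negbTE ye) //.
Qed.

Hypothesis rho_ge0 : forall x, 0 <= rho x.

Lemma Ex_le_on l g f f' :
  (forall w : {ffun T -> X}, (forall y, y \notin l -> w y = g y) -> f w <= f' w) ->
  Ex l g f <= Ex l g f'.
Proof.
elim: l g => [|e l IH] g /= H; first by apply: H.
apply: ler_sum => x _; apply: ler_wpM2l => //; apply: IH => w Hw; apply: H => y.
rewrite in_cons negb_or => /andP[ye yl]; rewrite Hw // ffunE (negbTE ye) //.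
Qed.

Lemma Ex_indep l g g' f :
  (forall w w' : {ffun T -> X}, (forall y, y \in l -> w y = w' y) ->
     (forall y, y \notin l -> w y = g y) -> (forall y, y \notin l -> w' y = g' y) ->
     f w = f w') ->
  Ex l g f = Ex l g' f.
Proof.
elim: l g g' => [|e l IH] g g' /= H; first by apply: H => // y; rewrite in_nil.
apply: eq_bigr => x _; congr (_ * _); apply: IH => w w' E1 E2 E3; apply: H.
- move=> y; rewrite in_cons; case/orP => [/eqP->|]; last exact: E1.
  case: (boolP (e \in l)) => [el|el]; first exact: E1.
  by rewrite E2 // E3 // !ffunE eqxx.
- move=> y; rewrite in_cons negb_or => /andP[ye yl]; rewrite E2 // ffunE (negbTE ye) //.
- move=> y; rewrite in_cons negb_or => /andP[ye yl]; rewrite E3 // ffunE (negbTE ye) //.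
Qed.

Lemma Ex_sub l g f f' :
  Ex l g (fun w => f w - f' w) = Ex l g f - Ex l g f'.
Proof.
elim: l g => [|e l IH] g //=.
rewrite -sumrB; apply: eq_bigr => x _; by rewrite IH mulrBr.
Qed.

Lemma Ex_one l g : \sum_(x : X) rho x = 1 -> Ex l g (fun _ => 1) = 1.
Proof.
move=> H; elim: l g => [|e l IH] g //=.
by rewrite -[RHS]H; apply: eq_bigr => x _; rewrite IH mulr1.
Qed.

Lemma Ex_sum l g f : uniq l ->
  Ex l g f = \sum_(w : {ffun T -> X} | [forall y, (y \notin l) ==> (w y == g y)])
                (\prod_(y <- l) rho (w y)) * f w.
Proof.
elim: l g => [|e l IH] g /=.
  move=> _; rewrite (big_pred1 g) ?big_nil ?mul1r // => w /=.
  apply/forallP/eqP => [H|-> //]; by apply/ffunP => y; apply/eqP.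
case/andP=> el ul.
rewrite (partition_big (fun w : {ffun T -> X} => w e) predT) //=.
apply: eq_bigr => x _; rewrite IH // mulr_sumr.
apply: eq_big => [w|w /forallP Hw]; last first.
  have /eqP we : w e == x by have := Hw e; rewrite el /= ffunE eqxx.
  by rewrite big_cons we mulrA.
apply/forallP/andP => [H|[/forallP H /eqP we] y].
  split.
    apply/forallP => y; apply/implyP; rewrite in_cons negb_or => /andP[ye yl].
    by have := H y; rewrite yl /= ffunE (negbTE ye).
  by have := H e; rewrite el /= ffunE eqxx.
apply/implyP => yl; rewrite ffunE; case: (eqVneq y e) => [->|ye]; first by rewrite we.
by have := H y; rewrite in_cons negb_or yl (negbTE ye).
Qed.

End ExSec.

Lemma sum_option (R : nmodType) (X : finType) (F : option X -> R) :
  \sum_(o : option X) F o = F None + \sum_(x : X) F (Some x).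
Proof.
rewrite (bigD1 None) //=; congr (_ + _).
rewrite (reindex_omap Some (fun o => o)) //=; last by case.
by apply: eq_bigl => j; rewrite eqxx.
Qed.

Section Main.
Variables (R : realFieldType) (T : finType) (c m : nat) (p q : R).
Hypotheses (hp0 : 0 <= p) (hp1 : p <= 1) (hq0 : 0 <= q) (hq1 : q <= 1)
  (hqc : c%:R * (q / c%:R) = q)
  (hpq : forall j, (j < m)%N -> p <= q / c%:R * (c - j)%:R).

Definition rb (b : bool) : R := if b then p else 1 - p.
Definition rc (o : option 'I_c) : R := if o is Some _ then q / c%:R else 1 - q.
Lemma rb_ge0 b : 0 <= rb b.
Proof. by case: b; rewrite /= ?subr_ge0. Qed.
Lemma rc_ge0 o : 0 <= rc o.
Proof. by case: o => [x|] /=; [apply: divr_ge0 | rewrite subr_ge0]. Qed.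

Definition covb (As : seq {set T}) (w : {ffun T -> bool}) : bool :=
  has (fun A : {set T} => [forall y in A, w y]) As.
Definition good (AU : {set T} * {set 'I_c}) (w : {ffun T -> option 'I_c}) : bool :=
  [forall y in AU.1, if w y is Some x then x \notin AU.2 else false] &&
  [forall y1 in AU.1, forall y2 in AU.1, (w y1 == w y2) ==> (y1 == y2)].
Definition covc F w := has (fun AU => good AU w) F.

Definition Qf l g As := Ex rb l g (fun w => (covb As w)%:R).
Definition subfam B B' := forall w, covb B w -> covb B' w.

Lemma covb_cons A B w : covb (A :: B) w = [forall y in A, w y] || covb B w.
Proof. by []. Qed.

Fixpoint Bx (x : 'I_c) (B : seq {set T}) (L : seq ({set T} * {set 'I_c})) :=
  if L is AU :: L' then Bx x (if x \notin AU.2 then AU.1 :: B else B) L' else B.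
Fixpoint Ball (B : seq {set T}) (L : seq ({set T} * {set 'I_c})) :=
  if L is AU :: L' then Ball (AU.1 :: B) L' else B.

Lemma covb_Bx x B L w : covb (Bx x B L) w =
  covb B w || has (fun AU : {set T} * {set 'I_c} => (x \notin AU.2) && [forall y in AU.1, w y]) L.
Proof.
elim: L B => [|AU L IH] B /=; first by rewrite orbF.
rewrite IH; case: (x \notin AU.2) => /=; rewrite ?covb_cons //.
by case: [forall y in AU.1, w y]; case: (covb B w).
Qed.

Lemma covb_Ball B L w : covb (Ball B L) w =
  covb B w || has (fun AU : {set T} * {set 'I_c} => [forall y in AU.1, w y]) L.
Proof.
elim: L B => [|AU L IH] B /=; first by rewrite orbF.
rewrite IH covb_cons.
by case: [forall y in AU.1, w y]; case: (covb B w).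
Qed.

Lemma Ball_sub (P : {set T} -> Prop) B L : (forall A, A \in B -> P A) ->
  (forall AU, AU \in L -> P AU.1) -> forall A, A \in Ball B L -> P A.
Proof.
elim: L B => [|AU L IH] B HB HL //=; apply: IH.
  by move=> A; rewrite in_cons => /orP[/eqP->|/HB//]; apply: HL; rewrite mem_head.
by move=> AU' H; apply: HL; rewrite in_cons H orbT.
Qed.

Lemma Bx_sub (P : {set T} -> Prop) x B L : (forall A, A \in B -> P A) ->
  (forall AU, AU \in L -> P AU.1) -> forall A, A \in Bx x B L -> P A.
Proof.
elim: L B => [|AU L IH] B HB HL //=; apply: IH.
  case: ifP => _ //.
  by move=> A; rewrite in_cons => /orP[/eqP->|/HB//]; apply: HL; rewrite mem_head.
by move=> AU' H; apply: HL; rewrite in_cons H orbT.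
Qed.

Section Sub.
Variables (l : seq T) (g : {ffun T -> bool}).
Local Notation Q := (Qf l g).

Lemma Q_mono B B' : subfam B B' -> Q B <= Q B'.
Proof.
move=> H; apply: Ex_le_on => [|w _]; first exact: rb_ge0.
by case: (boolP (covb B w)) => [/H -> //|_]; rewrite ler0n.
Qed.

Lemma marg_mono A B B' : subfam B B' -> Q (A :: B') - Q B' <= Q (A :: B) - Q B.
Proof.
move=> H; rewrite /Qf -!Ex_sub; apply: Ex_le_on => [|w _]; first exact: rb_ge0.
rewrite !covb_cons; have := H w.
case: [forall y in A, w y]; case: (covb B w); case: (covb B' w) => //= Hi;
  try (have := Hi isT; done); rewrite ?subrr ?subr0 ?lexx ?ler01 //.
Qed.

Lemma Q_cons_ge A B : 0 <= Q (A :: B) - Q B.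
Proof.
by rewrite subr_ge0; apply: Q_mono => w Hw; rewrite covb_cons Hw orbT.
Qed.

Fixpoint Dx (x : 'I_c) (B : seq {set T}) (L : seq ({set T} * {set 'I_c})) : R :=
  if L is AU :: L' then
    (if x \notin AU.2 then Q (AU.1 :: B) - Q B else 0) + Dx x (AU.1 :: B) L'
  else 0.
Fixpoint Dall (B : seq {set T}) (L : seq ({set T} * {set 'I_c})) : R :=
  if L is AU :: L' then (Q (AU.1 :: B) - Q B) + Dall (AU.1 :: B) L' else 0.

Lemma Dall_tel B L : Q (Ball B L) = Q B + Dall B L.
Proof. by elim: L B => [|AU L IH] B /=; [rewrite addr0 | rewrite IH; ring]. Qed.

Lemma Dx_mono x B B' L : subfam B B' -> Dx x B' L <= Dx x B L.
Proof.
elim: L B B' => [|AU L IH] B B' H //=; apply: lerD.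
  by case: ifP => _ //; apply: marg_mono.
apply: IH => w; rewrite !covb_cons; case/orP => [->//|/H->]; by rewrite orbT.
Qed.

Lemma Dx_Bx x B L : Q B + Dx x B L <= Q (Bx x B L).
Proof.
elim: L B => [|AU L IH] B /=; first by rewrite addr0.
case: ifP => _.
  apply: le_trans (IH _); rewrite addrA [Q B + _]addrC subrK //.
rewrite add0r; apply: le_trans (IH _); rewrite lerD2l; apply: Dx_mono.
by move=> w Hw; rewrite covb_cons Hw orbT.
Qed.

Lemma Dx_sum B (L : seq ({set T} * {set 'I_c})) : (forall AU, AU \in L -> (#|AU.2| < m)%N) ->
  p * Dall B L <= q / c%:R * \sum_(x : 'I_c) Dx x B L.
Proof.
elim: L B => [|AU L IH] B HL /=; first by rewrite big1 ?mulr0.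
rewrite big_split /= [p * (_ + _)]mulrDr [q / c%:R * (_ + _)]mulrDr; apply: lerD; last first.
  by apply: IH => AU' H; apply: HL; rewrite in_cons H orbT.
have -> : \sum_(x : 'I_c) (if x \notin AU.2 then Q (AU.1 :: B) - Q B else 0)
          = \sum_(x in ~: AU.2) (Q (AU.1 :: B) - Q B).
  by rewrite [RHS]big_mkcond; apply: eq_bigr => x _; rewrite finset.in_setC.
rewrite sumr_const -[_ *+ #|_|]mulr_natl mulrA.
have hC : #|~: AU.2| = (c - #|AU.2|)%N by have := cardsC AU.2; rewrite card_ord; lia.
rewrite hC; apply: ler_wpM2r; first exact: Q_cons_ge.
by apply: hpq; apply: HL; rewrite mem_head.
Qed.

End Sub.

Local Notation PT := ({set T} * {set 'I_c})%type.

Lemma leR_bool (b b' : bool) : (b -> b') -> (b%:R <= b'%:R :> R).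
Proof. case: b; case: b' => //= H; try exact: lexx; try exact: ler01; by have := H isT. Qed.

Lemma has_filter_pred (U : Type) (a b : pred U) s :
  has a (seq.filter b s) = has (predI a b) s.
Proof. by elim: s => //= x s IH; case: (b x) => /=; rewrite IH //; case: (a x). Qed.

Lemma covb_split (e : T) (F : seq ({set T} * {set 'I_c})) w :
  covb (map fst F) w = covb (map fst [seq AU : PT <- F | e \notin AU.1]) w ||
    has (fun AU : {set T} * {set 'I_c} => [forall y in AU.1, w y]) [seq AU : PT <- F | e \in AU.1].
Proof.
have Hp := introT permPl (perm_filterC (fun AU : {set T} * {set 'I_c} => e \notin AU.1) F).
rewrite /covb !has_map -[in LHS](perm_has _ Hp) has_cat; congr (_ || _).
by rewrite !has_filter_pred; apply: eq_has => AU /=; rewrite negbK.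
Qed.

Lemma covb_loc (l : seq T) (As : seq {set T}) (w w' : {ffun T -> bool}) : (forall A, A \in As -> A \subset [set y in l]) ->
  (forall y, y \in l -> w y = w' y) -> covb As w = covb As w'.
Proof.
move=> HA Hw; apply: eq_in_has => A /HA /fintype.subsetP sub; apply: eq_forallb_in => y yA.
by rewrite Hw //; have := sub y yA; rewrite inE.
Qed.

Lemma Qf_indep (l : seq T) g g' (As : seq {set T}) : (forall A, A \in As -> A \subset [set y in l]) ->
  Qf l g As = Qf l g' As.
Proof. by move=> HA; apply: Ex_indep => w w' E _ _; rewrite (covb_loc HA E). Qed.

Lemma good_ext (e : T) (x : 'I_c) (A : {set T}) (U : {set 'I_c}) (w : {ffun T -> option 'I_c}) : e \in A -> x \notin U -> w e = Some x ->
  good (A :\ e, x |: U) w -> good (A, U) w.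
Proof.
move=> eA xU we /andP[/forallP H1 /forallP H2]; apply/andP; split;
  apply/forallP => y; apply/implyP => /= yA.
  case: (eqVneq y e) => [->|ye]; first by rewrite we.
  have := H1 y; rewrite /= finset.in_setD1 ye yA /=.
  by case: (w y) => // z; rewrite finset.in_setU1 negb_or => /andP[_ ->].
apply/forallP => y2; apply/implyP => y2A; apply/implyP => /eqP E.
case: (eqVneq y e) => [ye|ye]; case: (eqVneq y2 e) => [y2e|y2e].
- by rewrite ye y2e.
- by have := H1 y2; rewrite /= finset.in_setD1 y2e y2A /= -E ye we finset.in_setU1 eqxx.
- by have := H1 y; rewrite /= finset.in_setD1 ye yA /= E y2e we finset.in_setU1 eqxx.
- have := H2 y; rewrite /= finset.in_setD1 ye yA /= => /forallP /(_ y2).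
  by rewrite finset.in_setD1 y2e y2A E eqxx.
Qed.

Definition Fx (e : T) (F : seq ({set T} * {set 'I_c})) (x : 'I_c) :=
  [seq AU : PT <- F | e \notin AU.1] ++
  [seq (AU.1 :\ e, x |: AU.2) | AU : PT <- F & (e \in AU.1) && (x \notin AU.2)].

Definition inv (l : seq T) (F : seq ({set T} * {set 'I_c})) :=
  forall AU, AU \in F -> (AU.1 \subset [set y in l]) && (#|AU.1| + #|AU.2| <= m)%N.

Lemma main l : uniq l -> forall gb gc F, inv l F ->
  Ex rb l gb (fun w => (covb (map fst F) w)%:R) <= Ex rc l gc (fun w => (covc F w)%:R).
Proof.
elim: l => [|e l IH].
  move=> _ gb gc F HF /=; apply: leR_bool.
  rewrite /covb has_map => /hasP [AU AUin _]; apply/hasP; exists AU => //.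
  have /andP[sub _] := HF AU AUin.
  have A0 : AU.1 = finset.set0.
    apply/setP => y; rewrite finset.in_set0; apply/negP => yA.
    by have := fintype.subsetP sub y yA; rewrite inE.
  by rewrite /good A0; apply/andP; split; apply/forallP => y; rewrite finset.in_set0.
move=> /andP[el ul] gb gc F HF.
set F' := [seq AU : PT <- F | e \notin AU.1].
set L := [seq (AU.1 :\ e, AU.2) | AU : PT <- F & e \in AU.1].
set B := map fst F'.
have HF' : inv l F'.
  move=> AU; rewrite mem_filter => /andP[eA /HF /andP[sub ->]]; rewrite andbT.
  apply/fintype.subsetP => y yA; have := fintype.subsetP sub y yA; rewrite !inE ?in_cons.
  by case/orP => // /eqP ye; move: eA; rewrite -ye yA.
have HB : forall A, A \in B -> A \subset [set y in l].
  by move=> A /mapP [AU /HF' /andP[sub _] ->].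
have HLs : forall AU, AU \in L -> AU.1 \subset [set y in l].
  move=> AU /mapP [AU0]; rewrite mem_filter => /andP[eA /HF /andP[sub _]] -> /=.
  apply/fintype.subsetP => y; rewrite finset.in_setD1 => /andP[ye yA]; have := fintype.subsetP sub y yA.
  by rewrite !inE ?in_cons (negbTE ye).
have HLc : forall AU, AU \in L -> (#|AU.2| < m)%N.
  move=> AU /mapP [AU0]; rewrite mem_filter => /andP[eA /HF /andP[_ hc]] -> /=.
  by move: hc; rewrite (cardsD1 e AU0.1) eA /=; lia.
have Eb : Ex rb (e :: l) gb (fun w => (covb (map fst F) w)%:R) =
          (1 - p) * Qf l gb B + p * Qf l gb (Ball B L).
  rewrite /= big_bool /= addrC; congr (_ * _ + _ * _).
    rewrite (@Ex_ext_on _ _ _ _ _ _ _ (fun w => (covb B w)%:R)); first by apply: Qf_indep.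
    move=> w Hw; have we : w e = false by rewrite Hw // ffunE eqxx.
    rewrite (covb_split e).
    have -> : has (fun AU : {set T} * {set 'I_c} => [forall y in AU.1, w y])
                  [seq AU : PT <- F | e \in AU.1] = false.
      by apply/hasP => -[AU]; rewrite mem_filter => /andP[eA _] /forallP /(_ e); rewrite eA we.
    by rewrite orbF.
  rewrite (@Ex_ext_on _ _ _ _ _ _ _ (fun w => (covb (Ball B L) w)%:R)).
    by apply: Qf_indep; apply: Ball_sub.
  move=> w Hw; have we : w e = true by rewrite Hw // ffunE eqxx.
  rewrite (covb_split e) covb_Ball; congr ((_ || _)%:R).
  rewrite /L has_map; apply: eq_in_has => AU; rewrite mem_filter => /andP[eA _] /=.
  apply/forallP/forallP => H y; apply/implyP => yA'.
    by move: yA'; rewrite finset.in_setD1 => /andP[_ yA]; have := H y; rewrite yA.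
  case: (eqVneq y e) => [->|ye]; first by rewrite we.
  by have := H y; rewrite finset.in_setD1 ye yA'.
rewrite Eb /= sum_option.
have H1 : Qf l gb B <= Ex rc l (upd gc e None) (fun w => (covc F w)%:R).
  apply: le_trans (IH ul gb (upd gc e None) F' HF') _.
  apply: Ex_le_on => [|w _]; first exact: rc_ge0.
  apply: leR_bool => /hasP[AU]; rewrite mem_filter => /andP[_ AUin] H.
  by apply/hasP; exists AU.
have H2 : forall x, Qf l gb B + Dx l gb x B L <=
                    Ex rc l (upd gc e (Some x)) (fun w => (covc F w)%:R).
  move=> x; apply: le_trans (Dx_Bx l gb x B L) _.
  have -> : Qf l gb (Bx x B L) = Ex rb l gb (fun w => (covb (map fst (Fx e F x)) w)%:R).
    apply: Ex_ext_on => w _; congr (_%:R).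
    rewrite covb_Bx /Fx map_cat /covb has_cat; congr (_ || _).
    rewrite /L !has_map !has_filter_pred; apply: eq_has => AU /=.
    by case: (e \in AU.1); case: (x \notin AU.2); rewrite /= ?andbF ?andbT.
  apply: le_trans (IH ul gb _ (Fx e F x) _) _.
    move=> AU; rewrite mem_cat => /orP[/HF' //|].
    move=> /mapP [AU0]; rewrite mem_filter => /andP[/andP[eA xU] /HF /andP[sub hc]] -> /=.
    apply/andP; split.
      apply/fintype.subsetP => y; rewrite finset.in_setD1 => /andP[ye yA]; have := fintype.subsetP sub y yA.
      by rewrite !inE ?in_cons (negbTE ye).
    by move: hc; rewrite (cardsD1 e AU0.1) eA cardsU1 xU /=; lia.
  apply: Ex_le_on => [|w Hw]; first exact: rc_ge0.
  have we : w e = Some x by rewrite Hw // ffunE eqxx.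
  apply: leR_bool; rewrite /covc /Fx has_cat => /orP[/hasP[AU] | /hasP[AU]].
    by rewrite mem_filter => /andP[_ AUin] H; apply/hasP; exists AU.
  move=> /mapP[AU0]; rewrite mem_filter => /andP[/andP[eA xU] AU0in] -> Hg.
  by apply/hasP; exists AU0 => //; case: AU0 eA xU AU0in Hg => A U /= eA xU _; apply: good_ext.
set a := Qf l gb B.
have Hsum : q * a + q / c%:R * \sum_(x : 'I_c) Dx l gb x B L <=
            \sum_(x : 'I_c) rc (Some x) * Ex rc l (upd gc e (Some x)) (fun w => (covc F w)%:R).
  apply: le_trans (_ : \sum_(x : 'I_c) q / c%:R * (a + Dx l gb x B L) <= _).
    rewrite -mulr_sumr big_split /= sumr_const card_ord -[a *+ _]mulr_natl mulrDr mulrA.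
    by rewrite [_ * c%:R]mulrC hqc.
  by apply: ler_sum => x _; apply: ler_wpM2l; [exact: divr_ge0 | exact: H2].
have HD := Dx_sum l gb B HLc.
have Htel := Dall_tel l gb B L.
have HN : (1 - q) * a <= rc None * Ex rc l (upd gc e None) (fun w => (covc F w)%:R).
  by apply: ler_wpM2l; [rewrite subr_ge0 | exact: H1].
rewrite Htel -/a.
set D := Dall l gb B L in HD *.
set Sx := \sum_(x : 'I_c) Dx l gb x B L in HD Hsum *.
set EN := rc None * _ in HN *.
set ES := \sum_(x : 'I_c) _ in Hsum *.
have -> : (1 - p) * a + p * (a + D) = (1 - q) * a + (q * a + p * D) by ring.
have H3 := lerD HN Hsum; apply: le_trans H3; by rewrite !lerD2l.
Qed.

End Main.

Lemma binom_Ex (R : realType) n k (p : R) (P : {set {set 'I_n}} -> bool) :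
  binom_prob k p P = Ex (rb p) (enum (ksets n k)) [ffun _ => false]
                        (fun w => (P [set y | w y])%:R).
Proof.
rewrite Ex_sum ?enum_uniq // /binom_prob big_mkcondr /=.
rewrite (reindex (fun H : {set {set 'I_n}} => [ffun y => y \in H])) /=; last first.
  by exists (fun w : {ffun {set 'I_n} -> bool} => [set y | w y]) => [H _|w _];
     [apply/setP => y; rewrite inE ffunE | apply/ffunP => y; rewrite ffunE inE].
apply: eq_big => [H|H HD].
  apply/fintype.subsetP/forallP => [HD y|HD y yH].
    apply/implyP; rewrite mem_enum !ffunE => yk.
    case: (boolP (y \in H)) => [/HD yk'|//]; by rewrite yk' in yk.
  by have := HD y; rewrite mem_enum !ffunE yH /=; case: (y \in ksets n k).
have -> : [set y | [ffun y0 => y0 \in H] y] = H by apply/setP => y; rewrite inE ffunE.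
rewrite big_enum /= (big_setID H) /=.
rewrite (eq_bigr (fun _ => p)); last by move=> y; rewrite inE ffunE => /andP[_ ->].
rewrite [X in _ = _ * X * _](eq_bigr (fun _ => 1 - p)); last first.
  by move=> y; rewrite inE ffunE => /andP[/negbTE -> _].
rewrite !prodr_const (finset.setIidPr HD) cardsD (finset.setIidPr HD).
by case: (P H); rewrite ?mulr1 ?mulr0.
Qed.

Lemma colored_Ex (R : realType) n k c (q : R) (P : colored_outcome n c -> bool) :
  colored_prob k q P = Ex (rc (c:=c) q) (enum (ksets n k)) [ffun _ => None]
                         (fun w => (P w)%:R).
Proof.
rewrite Ex_sum ?enum_uniq // /colored_prob big_mkcondr /=.
apply: eq_big => [w|w _].
  by apply: eq_forallb => y; rewrite mem_enum ffunE.
by rewrite big_enum /=; case: (P w); rewrite ?mulr1 ?mulr0.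
Qed.

Lemma per_n (R : realType) n k (S : {set {set 'I_n}}) (p eps : R) (c : nat) :
  uniform k S -> 0 <= p <= 1 -> 0 <= eps -> (c%:R : R) = (1 + eps) * #|S|%:R ->
  c%:R * p / (eps * #|S|%:R + 1) <= 1 ->
  binom_prob k p (has_copy S) <=
    colored_prob k (c%:R * p / (eps * #|S|%:R + 1)) (@has_rainbow_copy n c S) <= 1.
Proof.
move=> HS /andP[hp0 hp1] he hc hq1.
set m := #|S| in hc hq1 *; set d := eps * m%:R + 1 in hq1 *.
set q := c%:R * p / d in hq1 *.
have hem : 0 <= eps * m%:R by rewrite mulr_ge0.
have hd : 0 < d by rewrite /d; lra.
have hq0 : 0 <= q by rewrite /q divr_ge0 ?mulr_ge0 // ltW.
have hmc : (m <= c)%N.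
  by rewrite -(ler_nat R) hc mulrDl mul1r lerDl.
have hqc : c%:R * (q / c%:R) = q.
  case: (eqVneq c 0%N) => [c0|cn0]; first by rewrite /q c0 !mul0r.
  by rewrite mulrC divfK // pnatr_eq0.
have hpq : forall j, (j < m)%N -> p <= q / c%:R * (c - j)%:R.
  move=> j hj; have cn0 : c%:R != 0 :> R by rewrite pnatr_eq0; lia.
  have -> : q / c%:R = p / d.
    by rewrite /q mulrAC [c%:R * p / c%:R]mulrAC mulfV // mul1r.
  rewrite natrB; last by lia.
  have hj' : j%:R + 1 <= m%:R :> R by rewrite natr1 ler_nat.
  apply: le_trans (_ : p <= p / d * d) _; first by rewrite divfK ?gt_eqF.
  apply: ler_wpM2l; first by rewrite divr_ge0 // ltW.
  rewrite hc /d mulrDl mul1r; lra.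
pose F := map (fun f : {perm 'I_n} => ([set f @: e | e : {set 'I_n} in S], (finset.set0 : {set 'I_c})))
  (enum [set: {perm 'I_n}]).
have HF : inv m (enum (ksets n k)) F.
  move=> AU /mapP [f _ ->] /=; apply/andP; split; last by rewrite cards0 addn0 leq_imset_card.
  apply/fintype.subsetP => y /imsetP [e eS ->]; rewrite inE mem_enum.
  have := (fintype.subsetP HS) e eS; rewrite !inE card_imset //; exact: perm_inj.
apply/andP; split.
  rewrite binom_Ex colored_Ex.
  apply: le_trans (_ : _ <= Ex (rb p) (enum (ksets n k)) [ffun _ => false]
                           (fun w => (covb (map fst F) w)%:R)) _.
    apply: Ex_le_on => [|w _]; first exact: rb_ge0.
    apply: leR_bool => /existsP [f /forallP Hf].
    apply/hasP; exists [set f @: e | e : {set 'I_n} in S].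
      by apply/mapP; exists ([set f @: e | e : {set 'I_n} in S], finset.set0) => //; apply/mapP; exists f; rewrite ?mem_enum ?inE.
    apply/forallP => y; apply/implyP => /imsetP [e eS ->].
    by have := Hf e; rewrite eS inE.
  apply: le_trans (main hp0 hp1 hq0 hq1 hqc hpq (enum_uniq _) _ _ HF) _.
  apply: Ex_le_on => [|w _]; first exact: rc_ge0.
  apply: leR_bool => /hasP [AU /mapP [f _ ->] /andP[/forallP H1 /forallP H2]].
  apply/existsP; exists f; apply/andP; split.
    apply/forallP => e; apply/implyP => eS; have := H1 (f @: e).
    by rewrite /= imset_f //; case: (w _).
  apply/forallP => e1; apply/implyP => e1S; apply/forallP => e2; apply/implyP => e2S.
  apply/implyP => E; have := H2 (f @: e1); rewrite /= imset_f // => /forallP /(_ (f @: e2)).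
  rewrite imset_f // E /= => /eqP E'; apply/eqP; exact: (imset_inj (@perm_inj _ f)).
rewrite colored_Ex.
apply: le_trans (_ : _ <= Ex (rc (c:=c) q) (enum (ksets n k)) [ffun _ => None] (fun _ => 1)) _.
  apply: Ex_le_on => [|w _]; first exact: rc_ge0.
  by case: (has_rainbow_copy _ _); rewrite ?lexx ?ler01.
rewrite Ex_one // sum_option /= sumr_const card_ord -[_ *+ c]mulr_natl hqc.
by rewrite subrK.
Qed.


Unset Implicit Arguments. Set Strict Implicit.
Local Open Scope classical_set_scope.
Local Open Scope ring_scope.


Theorem theorem6 (R : realType) (k : nat) (S : forall n : nat, {set {set 'I_n}})
    (p : nat -> R) (eps : nat -> R) (c : nat -> nat) :
  (forall n, uniform k (S n)) ->
  (forall n, 0 <= p n <= 1) ->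
  (fun n => binom_prob k (p n) (has_copy (S n))) @ \oo --> (1 : R) ->
  (forall n, 0 <= eps n) ->
  (forall n, ((c n)%:R : R) = (1 + eps n) * (#|S n|)%:R) ->
  (\forall n \near \oo,
      (c n)%:R * p n / (eps n * (#|S n|)%:R + 1) <= (1 : R)) ->
  (fun n => colored_prob k ((c n)%:R * p n / (eps n * (#|S n|)%:R + 1))
                         (@has_rainbow_copy n (c n) (S n)))
    @ \oo --> (1 : R).
Proof.
move=> HS Hp Hb He Hc Hq.
apply: (squeeze_cvgr _ Hb (cvg_cst (1 : R))).
apply: filterS Hq => n hn; exact: per_n.
Qed.
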